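(* Let $G=(V,E)$ be an unweighted undirected graph, let $S\subseteq V$ be non-empty, let $u,v\in V$ and let $P(u,v)$ be a shortest path between $u$ and $v$ in $G$. If $P(u,v)$ is not contained in $G_S$, then $h_S(u)+h_S(v)\le d_G(u,v)+1$.
   Context: All edges have weight $1$. $d_G(u,v)$ is the shortest-path distance in $G$; $h_S(u)=\min_{s\in S}d_G(u,s)$. For $v\in V$, $E_S(v)$ is the set of edges incident to $v$ whose weight is at most $h_S(v)$; $E_S=\bigcup_{v\in V}E_S(v)$ and $G_S=(V,E_S)$. ''$P(u,v)$ is contained in $G_S$'' means every edge of $P(u,v)$ is in $E_S$. *)

(* Defs.v *)
(* A finite simple unweighted undirected graph is a
   symmetric irreflexive relation e on a finType T. Distances live in
   option nat, where None encodes +infinity (no path). *)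
From mathcomp Require Import all_boot.
Set Implicit Arguments. Unset Strict Implicit. Unset Printing Implicit Defensive.

Section Graph.
Variables (T : finType) (e : rel T).

Definition walk_len (n : nat) (u v : T) : bool :=
  [exists p : n.-tuple T, path e u p && (last u p == v)].

(* shortest-path distance d_G(u,v); a shortest walk (if any) is a simple
   path and so has fewer than #|T| edges. None = +infinity. *)
Definition dist (u v : T) : option nat :=
  omap val [pick n : 'I_#|T| | walk_len n u v &&
              [forall m : 'I_#|T|, (m < n) ==> ~~ walk_len m u v]].

Definition omin (a b : option nat) : option nat :=
  match a, b with
  | Some x, Some y => Some (minn x y)
  | Some x, None => Some x
  | None, _ => b
  end.
Definition oadd (a b : option nat) : option nat :=
  match a, b with Some x, Some y => Some (x + y) | _, _ => None end.
Definition ole (a b : option nat) : bool :=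
  match a, b with
  | _, None => true
  | None, Some _ => false
  | Some x, Some y => x <= y
  end.

Definition hS (S : {set T}) (u : T) : option nat :=
  \big[omin/None]_(s in S) dist u s.

(* E_S(x): edges incident to x of weight (=1) at most h_S(x).
   An edge {x,y} is in E_S iff it is in E_S(x) or in E_S(y). *)
Definition inES (S : {set T}) (x y : T) : bool :=
  e x y && (ole (Some 1) (hS S x) || ole (Some 1) (hS S y)).

Definition shortest_path (u v : T) (p : seq T) : Prop :=
  [/\ path e u p, last u p = v & dist u v = Some (size p)].

Definition path_in_GS (S : {set T}) (u : T) (p : seq T) : Prop :=
  path (inES S) u p.

End Graph.

(* Main.v *)
Require Import Defs.
From mathcomp Require Import all_boot.
Set Implicit Arguments. Unset Strict Implicit. Unset Printing Implicit Defensive.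

Section Aux.
Variables (T : finType) (e : rel T).

Lemma dist_some u v k : dist e u v = Some k -> (k < #|T|) && walk_len e k u v.
Proof.
rewrite /dist; case: pickP => [m /andP[Hw _]|] //= [<-].
by rewrite ltn_ord Hw.
Qed.

Lemma dist_le n u x : walk_len e n u x -> n < #|T| ->
  exists2 m, dist e u x = Some m & m <= n.
Proof.
move=> Hw Hn; rewrite /dist; case: pickP => [m /andP[_ /forallP Hmin]|Hnone] /=.
- exists (val m) => //; rewrite leqNgt; apply/negP => Hlt.
  by have := Hmin (Ordinal Hn); rewrite /= Hlt /= Hw.
- exfalso.
  have Hex : exists k, (k < #|T|) && walk_len e k u x by exists n; rewrite Hn Hw.
  case: (ex_minnP Hex) => k0 /andP[Hk0 Hwk] Hmin.
  have := Hnone (Ordinal Hk0); rewrite /= Hwk /= => /negP; apply.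
  apply/forallP => m; apply/implyP => Hm; apply/negP => Hwm.
  have := Hmin m; rewrite ltn_ord Hwm => /(_ isT).
  by rewrite leqNgt Hm.
Qed.

Lemma walk_of_path u q : path e u q -> walk_len e (size q) u (last u q).
Proof. by move=> H; apply/existsP; exists (in_tuple q); rewrite /= H eqxx. Qed.

Lemma walk0 x s : walk_len e 0 x s -> x = s.
Proof.
case/existsP => t /andP[_ /eqP]; by rewrite (tuple0 t).
Qed.

Lemma ole_omin_l a b : ole (omin a b) a.
Proof. by case: a; case: b => //= m n; exact: geq_minl. Qed.
Lemma ole_omin_r a b : ole (omin a b) b.
Proof. by case: a; case: b => //= m n; exact: geq_minr. Qed.
Lemma ole_trans a b c : ole a b -> ole b c -> ole a c.
Proof. by case: a; case: b; case: c => //= x y z; apply: leq_trans. Qed.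

Lemma big_omin_le (I : eqType) (r : seq I) (P : pred I) (F : I -> option nat) s :
  s \in r -> P s -> ole (\big[omin/None]_(i <- r | P i) F i) (F s).
Proof.
elim: r => // a r IH; rewrite in_cons big_cons => /orP[/eqP<-|Hs] Ps.
  by rewrite Ps ole_omin_l.
case: (P a); last exact: IH.
exact: ole_trans (ole_omin_r _ _) (IH Hs Ps).
Qed.

Lemma hS_le (S : {set T}) u s : s \in S -> ole (hS e S u) (dist e u s).
Proof. by move=> Hs; apply: big_omin_le => //; rewrite mem_index_enum. Qed.

Lemma hS_att (S : {set T}) x : hS e S x = None \/ exists2 s, s \in S & hS e S x = dist e x s.
Proof.
rewrite /hS; apply: (big_ind (fun o => o = None \/ exists2 s, s \in S & o = dist e x s)).
- by left.
- move=> a b [->|[s1 H1 E1]]; first by [].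
  move=> [->|[s2 H2 E2]].
    by case: a E1 => [m|] E1 /=; [right; exists s1|left].
  case: a E1 => [m|] E1; case: b E2 => [n|] E2 /=; try by left.
  + case: (leqP m n) => Hmn; right.
    * by exists s1 => //; rewrite -E1 (minn_idPl Hmn).
    * by exists s2 => //; rewrite -E2 (minn_idPr (ltnW Hmn)).
  + by right; exists s1.
  + by right; exists s2.
- by move=> s Hs; right; exists s.
Qed.

Lemma hS0 (S : {set T}) x : hS e S x = Some 0 -> x \in S.
Proof.
case: (hS_att S x) => [->//|[s Hs ->]] /dist_some /andP[_ /walk0 ->] //.
Qed.

Lemma split_bad (S : {set T}) u p : ~ path (inES e S) u p ->
  exists p1 y p2, [/\ p = p1 ++ y :: p2 & ~~ inES e S (last u p1) y].
Proof.
elim: p u => [|z q IH] u /=; first by [].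
case Huz: (inES e S u z) => /= H.
- case: (IH z H) => p1 [y [p2 [-> Hb]]].
  by exists (z :: p1), y, p2.
- by exists [::], z, q; rewrite Huz.
Qed.

End Aux.

Theorem lemma23 (T : finType) (e : rel T) (He_sym : symmetric e)
  (He_irr : irreflexive e) (S : {set T}) (HS : S != set0)
  (u v : T) (p : seq T) :
  shortest_path e u v p ->
  ~ path_in_GS e S u p ->
  ole (oadd (hS e S u) (hS e S v)) (oadd (dist e u v) (Some 1)).
Proof.
move=> [Hp Hl Hd] Hbad.
have /andP[Hsz _] := dist_some Hd.
case: (split_bad Hbad) => p1 [y [p2 [Ep Hb]]].
set x := last u p1 in Hb.
move: Hp; rewrite Ep cat_path /= => /and3P[Hp1 Exy Hp2].
have Hin z : ole (Some 1) (hS e S z) = false -> z \in S.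
  by case: (hS e S z) (@hS0 _ e S z) => [[|k]|] //= H _; apply: H.
move: Hb; rewrite /inES Exy /= negb_or => /andP[/negbTE Hx /negbTE Hy].
have xS : x \in S by exact: Hin.
have yS : y \in S by exact: Hin.
have Hsp : size p = size p1 + (size p2).+1 by rewrite Ep size_cat.
have H1 : size p1 < #|T| by apply: leq_ltn_trans Hsz; rewrite Hsp leq_addr.
have [a Ha Hale] := dist_le (walk_of_path Hp1) H1.
have Hlv : last y p2 = v by rewrite -Hl Ep last_cat.
have Hrev : path e v (rev (belast y p2)).
  by rewrite -Hlv rev_path; apply: sub_path Hp2 => z w /=; rewrite He_sym.
have Hlr : last v (rev (belast y p2)) = y.
  by rewrite -Hlv; case: (p2) => [|z q] //=; rewrite rev_cons last_rcons.
have Hw2 := walk_of_path Hrev; rewrite Hlr size_rev size_belast in Hw2.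
have H2 : size p2 < #|T| by apply: leq_ltn_trans Hsz; rewrite Hsp -addSnnS leq_addl.
have [b Hb Hble] := dist_le Hw2 H2.
have := hS_le e u xS; rewrite Ha.
have := hS_le e v yS; rewrite Hb.
rewrite Hd.
case: (hS e S u) => [a'|] //; case: (hS e S v) => [b'|] //= Hb' Ha'.
rewrite Hsp; apply: leq_trans (leq_add (leq_trans Ha' Hale) (leq_trans Hb' Hble)) _.
by rewrite addn1 addnS; apply: leqW; apply: leqW; rewrite leq_add2l.
Qed.
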